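(* Let $(S,* )$ be a finite cycle set of size $n\ge 2$ which is square-free (i.e. $s*s=s$ for all $s\in S$) and whose permutation group $\mathcal G$ is abelian. Then its class $d$ satisfies $$d\le a_n:=\max\Big\{\prod_{i=1}^k n_i \;\Big|\; k\in\mathbb N,\ 1\le n_1<\dots<n_k,\ n_1+\dots+n_k=n\Big\}.$$
   Context: A cycle set is a set $S$ with a binary operation $*$ such that for every $s$ the map $t\mapsto s*t$ is a bijection and $(s*t)*(s*u)=(t*s)*(t*u)$ for all $s,t,u$. Write $S=\{s_1,\dots,s_n\}$ and let $\psi(s)\in\mathfrak S_n$ satisfy $s_i*s_j=s_{\psi(s_i)(j)}$. The permutation group $\mathcal G$ is the subgroup of $\mathfrak S_n$ generated by $\psi(s_1),\dots,\psi(s_n)$. With $T(s)=s*s$ and $\psi_k(s)=\psi(T^{k-1}(s))\circ\cdots\circ\psi(T(s))\circ\psi(s)$, the (Dehornoy) class $d$ is the least integer $d\ge1$ such that $\psi_d(s)=\mathrm{id}$ for all $s\in S$. *)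

(* Defs.v *)
From mathcomp Require Import all_boot all_order all_fingroup.
Set Implicit Arguments. Unset Strict Implicit. Unset Printing Implicit Defensive.

Local Open Scope group_scope.

Definition is_cycle_set (S : finType) (op : S -> S -> S) : Prop :=
  (forall s : S, bijective (op s)) /\
  (forall s t u : S, op (op s t) (op s u) = op (op t s) (op t u)).

Definition square_free (S : finType) (op : S -> S -> S) : Prop :=
  forall s : S, op s s = s.

Definition psi_of (S : finType) (op : S -> S -> S) (psi : S -> {perm S}) : Prop :=
  forall s t : S, psi s t = op s t.

Definition perm_group (S : finType) (psi : S -> {perm S}) : {set {perm S}} :=
  <<[set psi s | s : S]>>.

Definition Tmap (S : finType) (op : S -> S -> S) (s : S) : S := op s s.

(* psi_k(s) = psi(T^{k-1} s) o ... o psi(T s) o psi(s).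
   In mathcomp, (p * q) x = q (p x), so the composite applying psi(s) first
   is the ordered product psi s * psi (T s) * ... * psi (T^{k-1} s). *)
Definition psi_k (S : finType) (op : S -> S -> S) (psi : S -> {perm S})
  (k : nat) (s : S) : {perm S} :=
  \prod_(i < k) psi (iter i (Tmap op) s).

Definition is_class (S : finType) (op : S -> S -> S) (psi : S -> {perm S})
  (d : nat) : Prop :=
  (1 <= d)%N /\ (forall s, psi_k op psi d s = 1) /\
  (forall d', (1 <= d')%N -> (d' < d)%N -> ~ (forall s, psi_k op psi d' s = 1)).

(* Strictly increasing sequences of positive integers correspond exactly to
   finite sets of positive integers (all <= n since the sum is n). *)
Definition a_seq (n : nat) : nat :=
  \max_(A : {set 'I_n.+1} | (ord0 \notin A) && (\sum_(i in A) (i : nat) == n))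
     \prod_(i in A) (i : nat).

(* Main.v *)
Require Import Defs.
From mathcomp Require Import all_boot all_order all_fingroup all_solvable.
From mathcomp Require Import zify.
Set Implicit Arguments. Unset Strict Implicit. Unset Printing Implicit Defensive.

Local Open Scope group_scope.

Lemma bump_lemma n (D : {set 'I_n.+1}) : ord0 \notin D ->
  (\sum_(i in D) (i : nat) <= n)%N -> (0 < n)%N ->
  (\prod_(i in D) (i : nat) <= a_seq n)%N.
Proof.
move=> D0 Dsum n0.
have [->|[m0 m0D]] := set_0Vmem D.
  rewrite big_set0.
  apply: (@leq_trans (\prod_(i in [set (ord_max : 'I_n.+1)]) (i : nat))).
    by rewrite big_set1.
  rewrite /a_seq; apply: leq_bigmax_cond.
  rewrite in_set1 big_set1 /= eqxx andbT.
  by rewrite -val_eqE /=; lia.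
case: (arg_maxnP (fun i : 'I_n.+1 => (i : nat)) m0D) => m mD mmax.
set r := (n - \sum_(i in D) (i : nat))%N.
have sD : (\sum_(i in D) (i : nat) = m + \sum_(i in D :\ m) (i : nat))%N
  by rewrite (big_setD1 m mD).
have pD : (\prod_(i in D) (i : nat) = m * \prod_(i in D :\ m) (i : nat))%N
  by rewrite (big_setD1 m mD).
have mle : (m + r <= n)%N.
  by rewrite /r sD; move: Dsum; rewrite sD; lia.
set m' : 'I_n.+1 := inord (m + r).
have m'v : (m' : nat) = (m + r)%N by rewrite inordK // ltnS.
have m'nin : m' \notin D :\ m.
  apply/negP => /setD1P [ne iD].
  have := mmax _ iD; rewrite m'v => h.
  have r0 : r = 0%N by lia.
  move/negP: ne; apply; apply/eqP/val_inj; by rewrite /= m'v r0 addn0.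
have HA : (ord0 \notin m' |: (D :\ m)) && (\sum_(i in m' |: (D :\ m)) (i : nat) == n).
  rewrite big_setU1 //= m'v.
  have mpos : (0 < m)%N.
    rewrite lt0n; apply/negP => /eqP h; move/negP: D0; apply.
    by have -> : (ord0 : 'I_n.+1) = m by apply: val_inj.
  apply/andP; split.
    rewrite !inE negb_or; apply/andP; split.
      by rewrite -val_eqE /= m'v; lia.
    by rewrite negb_and D0 orbT.
  apply/eqP; move: Dsum; rewrite /r sD => h; by rewrite addnAC subnKC.
apply: (@leq_trans (\prod_(i in m' |: (D :\ m)) (i:nat))); last first.
  by rewrite /a_seq; apply: leq_bigmax_cond; exact: HA.
by rewrite big_setU1 //= pD m'v leq_mul2r leq_addr orbT.
Qed.

Lemma perm_order_le (S : finType) (x : {perm S}) : (0 < #|S|)%N ->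
  (#[x] <= a_seq #|S|)%N.
Proof.
move=> n0.
set n := #|S|.
pose sz (y : S) := #|porbit x y|.
have szn y : (sz y < n.+1)%N by rewrite ltnS /sz /n max_card.
have szp y : (0 < sz y)%N by rewrite lt0n card_porbit_neq0.
pose D : {set 'I_n.+1} := [set inord (sz y) | y : S].
have Dv i : i \in D -> exists y, (i : nat) = sz y.
  by case/imsetP => y _ ->; exists y; rewrite inordK.
have D0 : ord0 \notin D.
  by apply/negP => /Dv [y /= h]; have := szp y; rewrite -h.
have Dsum : (\sum_(i in D) (i : nat) <= n)%N.
  apply: (@leq_trans (\sum_(i in D) #|[set y | inord (sz y) == i]|)).
    apply: leq_sum => i iD.
    have [y0 hy0] := Dv i iD.
    rewrite hy0 /sz; apply: subset_leq_card; apply/subsetP => z zin.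
    rewrite inE; apply/eqP/val_inj; rewrite /= (inordK (szn z)); transitivity (sz y0); last by rewrite hy0. rewrite /sz.
    have : porbit x z = porbit x y0 by apply/eqP; rewrite eq_porbit_mem.
    by move=> ->.
  apply: (@leq_trans (\sum_(y : S) 1)); last by rewrite sum1_card.
  rewrite (partition_big (fun y => (inord (sz y) : 'I_n.+1)) (fun i : 'I_n.+1 => i \in D)) /=.
    apply: leq_sum => i _; rewrite -sum1_card; apply: eq_leq; apply: eq_bigl => y.
    by rewrite inE.
  by move=> y _; apply: imset_f.
have Np : (0 < \prod_(i in D) (i : nat))%N.
  rewrite big_mkcond /=; apply: prodn_gt0 => i; case: ifP => // iD.
  have [y ->] := Dv i iD; exact: szp.
have N1 : x ^+ (\prod_(i in D) (i : nat)) = 1.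
  apply/permP => y; rewrite perm1.
  have yD : (inord (sz y) : 'I_n.+1) \in D by apply: imset_f.
  rewrite (big_setD1 _ yD) /= inordK // expgM.
  apply: permX_fix; by rewrite permX iter_porbit.
apply: leq_trans (bump_lemma D0 Dsum n0).
by apply: dvdn_leq => //; rewrite order_dvdn N1.
Qed.

Lemma prod_const_g (gT : finGroupType) (g : gT) k : \prod_(i < k) g = g ^+ k.
Proof.
elim: k => [|k IH]; first by rewrite big_ord0.
by rewrite big_ord_recr /= IH expgSr.
Qed.

Theorem mainTheorem4 (S : finType) (op : S -> S -> S) (psi : S -> {perm S}) :
  is_cycle_set op -> psi_of op psi -> (2 <= #|S|)%N -> square_free op ->
  abelian (perm_group psi) ->
  exists d : nat, is_class op psi d /\ (d <= a_seq #|S|)%N.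
Proof.
move=> _ _ S2 sqf ab.
set G := perm_group psi.
have psikE k s : psi_k op psi k s = psi s ^+ k.
  rewrite /psi_k -prod_const_g; apply: eq_bigr => i _.
  congr (psi _); elim: (nat_of_ord i) => // j IH.
  by rewrite iterS IH /Tmap sqf.
have psiG s : psi s \in G by rewrite /G /perm_group mem_gen // imset_f.
pose P := fun d => (0 < d)%N && [forall s, psi_k op psi d s == 1].
have PE : P (exponent G).
  rewrite /P exponent_gt0; apply/forallP => s; rewrite psikE.
  by apply/eqP; apply: expg_exponent.
have exP : exists d, P d by exists (exponent G).
case: (ex_minnP exP) => d Pd dmin.
exists d; split.
  move/andP: Pd => [d0 /forallP Hd].
  split => //; split; first by move=> s; apply/eqP.
  move=> d' d'1 d'lt Hall.
  have : (d <= d')%N.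
    by apply: dmin; rewrite /P d'1; apply/forallP => s; apply/eqP.
  by rewrite leqNgt d'lt.
apply: leq_trans (dmin _ PE) _.
have [g gG ->] := exponent_witness (abelian_nil ab).
apply: perm_order_le; lia.
Qed.
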